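(* Let $c\ge 0$ be a budget. Consider the primal problem $$\max_{w,\lambda_2,\mu}\ \lambda_2\quad\text{s.t.}\quad \sum_{\{i,j\}\in E_3}w_{ij}L_{ij}+L_0+\mu\boldsymbol e\boldsymbol e^T-\lambda_2 I\succeq 0,\ \ \sum_{\{i,j\}\in E_3}w_{ij}=c,\ \ w_{ij}\ge 0,$$ and the dual problem $$\max_{\xi\in\mathbb{R},\,X\in\mathbb{R}^{n\times n}}\ c\xi-\langle X,L_0\rangle\quad\text{s.t.}\quad \langle X,I\rangle=1,\ \ \langle X,\boldsymbol e\boldsymbol e^T\rangle=0,\ \ \langle X,L_{ij}\rangle\le-\xi\ \ \forall\{i,j\}\in E_3,\ \ X\succeq 0.$$ Then strong duality holds (the two optimal values are equal and finite), and the dual problem attains its optimal value.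
   Context: A multiplex network consists of two layers $G_1=(V_1,E_1)$ and $G_2=(V_2,E_2)$, simple undirected graphs with $|V_1|=|V_2|=N$; the vertices of $G_1$ are numbered $1,\dots,N$ and those of $G_2$ are numbered $N+1,\dots,2N$, and $n=2N$. The interlayer edges form the perfect matching $E_3=\{\{i,N+i\}:i=1,\dots,N\}$, carrying nonnegative weights $w_{ij}$. For an edge $\{i,j\}$ let $L_{ij}=(\delta_i-\delta_j)(\delta_i-\delta_j)^T$, $\delta_i$ the $i$-th standard basis vector of $\mathbb{R}^n$. $L_0=\sum_{\{i,j\}\in E_1\cup E_2}L_{ij}$. $\boldsymbol e$ is the all-ones vector in $\mathbb{R}^n$, $\langle A,B\rangle=\operatorname{Tr}(A^TB)$. *)

(* Defs.v *)
From HB Require Import structures.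
From mathcomp Require Import all_boot all_order all_algebra.
From mathcomp Require Import reals.
Set Implicit Arguments. Unset Strict Implicit. Unset Printing Implicit Defensive.
Import Order.TTheory GRing.Theory Num.Theory.
Local Open Scope ring_scope.

Definition psd (R : realType) (n : nat) (A : 'M[R]_n) : Prop :=
  A^T = A /\ forall v : 'cV[R]_n, 0 <= (v^T *m A *m v) 0 0.

Definition frob (R : realType) (n : nat) (A B : 'M[R]_n) : R := \tr (A^T *m B).

Definition Ledge (R : realType) (n : nat) (i j : 'I_n) : 'M[R]_n :=
  \matrix_(k, l) (((k == i)%:R - (k == j)%:R) * ((l == i)%:R - (l == j)%:R)).

Definition eeT (R : realType) (n : nat) : 'M[R]_n := const_mx 1.

(* Layer 1 vertex i (i < N) is lshift N i (number i+1 in the paper);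
   layer 2 vertex i is rshift N i (number N+i+1 in the paper).
   Edge sets of the layers are given as symmetric irreflexive relations on 'I_N. *)
Definition simple_graph (N : nat) (e : rel 'I_N) : Prop :=
  (forall i, ~~ e i i) /\ (forall i j, e i j = e j i).

(* L_0 = sum over {i,j} in E_1 u E_2 of L_ij (each unordered edge once: i < j). *)
Definition L0 (R : realType) (N : nat) (e1 e2 : rel 'I_N) : 'M[R]_(N + N) :=
  \sum_(i : 'I_N) \sum_(j : 'I_N | (i < j)%N && e1 i j)
      Ledge R (lshift N i) (lshift N j)
  + \sum_(i : 'I_N) \sum_(j : 'I_N | (i < j)%N && e2 i j)
      Ledge R (rshift N i) (rshift N j).

(* sum_{ {i,N+i} in E_3 } w_i L_{i,N+i} *)
Definition Linter (R : realType) (N : nat) (w : 'I_N -> R) : 'M[R]_(N + N) :=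
  \sum_(i : 'I_N) w i *: Ledge R (lshift N i) (rshift N i).

Definition primal_feasible (R : realType) (N : nat) (e1 e2 : rel 'I_N) (c : R)
    (w : 'I_N -> R) (lam2 mu : R) : Prop :=
  psd (Linter w + L0 R e1 e2 + mu *: eeT R (N + N) - lam2%:M)
  /\ \sum_(i : 'I_N) w i = c
  /\ (forall i, 0 <= w i).

Definition dual_feasible (R : realType) (N : nat)
    (xi : R) (X : 'M[R]_(N + N)) : Prop :=
  frob X 1%:M = 1
  /\ frob X (eeT R (N + N)) = 0
  /\ (forall i : 'I_N, frob X (Ledge R (lshift N i) (rshift N i)) <= - xi)
  /\ psd X.

(* Main.v *)
Require Import Defs.
From HB Require Import structures.
From mathcomp Require Import all_boot all_order all_algebra.
From mathcomp Require Import reals.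
From mathcomp Require Import all_classical all_reals all_analysis.
From mathcomp Require Import ring lra.
Set Implicit Arguments. Unset Strict Implicit. Unset Printing Implicit Defensive.
Import Order.TTheory GRing.Theory Num.Theory.
Import numFieldNormedType.Exports.
Local Open Scope classical_set_scope.
Local Open Scope ring_scope.

Section Top.
Variable R : realType.

Lemma sum_cont (T : topologicalType) (I : Type) (s : seq I) (f : I -> T -> R) :
  (forall i, continuous (f i)) -> continuous (fun x => \sum_(i <- s) f i x).
Proof.
move=> hf; elim: s => [|a s IH].
  under eq_fun do rewrite big_nil. exact: cst_continuous.
under eq_fun do rewrite big_cons.
move=> x; apply: (@continuousD _ R^o); [exact: hf|exact: IH].
Qed.

Lemma contD (T : topologicalType) (f g : T -> R) :
  continuous f -> continuous g -> continuous (fun x => f x + g x).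
Proof. by move=> hf hg x; apply: (@continuousD _ R^o); [exact: hf|exact: hg]. Qed.

Lemma contMc (T : topologicalType) (c : R) (f : T -> R) :
  continuous f -> continuous (fun x => c * f x).
Proof.
move=> hf x.
have -> : (fun x => c * f x) = (fun=> c) \* f by [].
by apply: continuousM; [exact: cst_continuous|exact: hf].
Qed.

Lemma lin_cont m (phi : 'rV[R]_m -> R) :
  (forall a u v, phi (a *: u + v) = a * phi u + phi v) -> continuous phi.
Proof.
move=> hl.
have h0 : phi 0 = 0.
  have := hl 1 0 0; rewrite scaler0 addr0 mul1r => /eqP; rewrite -subr_eq0.
  by rewrite opprD addrA subrr sub0r oppr_eq0 => /eqP.
have hD : forall u v, phi (u + v) = phi u + phi v.
  by move=> u v; have := hl 1 u v; rewrite scale1r mul1r.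
have hZ : forall a u, phi (a *: u) = a * phi u.
  by move=> a u; rewrite -[a *: u]addr0 hl h0 addr0.
have hE : phi = fun v => \sum_(j <- index_enum 'I_m) v ord0 j * phi (delta_mx ord0 j).
  apply: funext => v; rewrite {1}(matrix_sum_delta v) big_ord1.
  rewrite (big_morph phi hD h0); apply: eq_bigr => j _; exact: hZ.
rewrite hE; apply: sum_cont => j.
have -> : (fun v : 'rV[R]_m => v ord0 j * phi (delta_mx ord0 j)) = (fun v => v ord0 j) \* (fun=> phi (delta_mx ord0 j)) by [].
move=> x; apply: continuousM; [exact: coord_continuous | exact: cst_continuous].
Qed.

End Top.

Section Alg.
Variable R : realType.
Variable n : nat.
Implicit Types (A B X : 'M[R]_n) (u v : 'cV[R]_n).

Definition bil A u v : R := (u^T *m A *m v) 0 0.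

Lemma bilDl A u1 u2 v : bil A (u1 + u2) v = bil A u1 v + bil A u2 v.
Proof. by rewrite /bil linearD /= !mulmxDl mxE. Qed.
Lemma bilDr A u v1 v2 : bil A u (v1 + v2) = bil A u v1 + bil A u v2.
Proof. by rewrite /bil !mulmxDr mxE. Qed.
Lemma bilZl A a u v : bil A (a *: u) v = a * bil A u v.
Proof. by rewrite /bil linearZ /= -!scalemxAl mxE. Qed.
Lemma bilZr A a u v : bil A u (a *: v) = a * bil A u v.
Proof. by rewrite /bil -!scalemxAr mxE. Qed.
Lemma bilNl A u v : bil A (- u) v = - bil A u v.
Proof. by rewrite -scaleN1r bilZl mulN1r. Qed.
Lemma bilNr A u v : bil A u (- v) = - bil A u v.
Proof. by rewrite -scaleN1r bilZr mulN1r. Qed.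
Lemma bilBl A u1 u2 v : bil A (u1 - u2) v = bil A u1 v - bil A u2 v.
Proof. by rewrite bilDl bilNl. Qed.
Lemma bilBr A u v1 v2 : bil A u (v1 - v2) = bil A u v1 - bil A u v2.
Proof. by rewrite bilDr bilNr. Qed.
Lemma bilDA A B u v : bil (A + B) u v = bil A u v + bil B u v.
Proof. by rewrite /bil mulmxDr mulmxDl mxE. Qed.
Lemma bilZA a A u v : bil (a *: A) u v = a * bil A u v.
Proof. by rewrite /bil -scalemxAr -scalemxAl mxE. Qed.
Lemma bilNA A u v : bil (- A) u v = - bil A u v.
Proof. by rewrite -scaleN1r bilZA mulN1r. Qed.
Lemma bilBA A B u v : bil (A - B) u v = bil A u v - bil B u v.
Proof. by rewrite bilDA bilNA. Qed.
Lemma bil_scalar a u v : bil a%:M u v = a * bil 1%:M u v.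
Proof. by rewrite -bilZA scalemx1. Qed.
Lemma bil_tr A u v : bil A u v = bil A^T v u.
Proof.
rewrite /bil -[in LHS](trmxK (u^T *m A *m v)) mxE.
by rewrite !trmx_mul trmxK mulmxA.
Qed.
Lemma bil_delta A i j : bil A (delta_mx i 0) (delta_mx j 0) = A i j.
Proof. by rewrite /bil trmx_delta -rowE -colE !mxE. Qed.
Lemma bil_rank1 A u w v : bil (u *m w^T) v v = bil A v v.
Abort.
Lemma mx11_mul (P Q : 'M[R]_1) : (P *m Q) 0 0 = P 0 0 * Q 0 0.
Proof. by rewrite mxE big_ord1. Qed.
Lemma bil_outer u w v z : bil (u *m w^T) v z = (v^T *m u) 0 0 * (w^T *m z) 0 0.
Proof. by rewrite /bil mulmxA -mulmxA mx11_mul. Qed.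
Lemma mx11_tr (P : 'M[R]_(1,n)) (Q : 'M[R]_(n,1)) : (P *m Q) 0 0 = (Q^T *m P^T) 0 0.
Proof. rewrite -trmx_mul. rewrite [in RHS]mxE. done. Qed.

Lemma frobE X A : frob X A = \sum_k \sum_l X l k * A l k.
Proof. by rewrite /frob /mxtrace; apply: eq_bigr => k _; rewrite mxE; apply: eq_bigr => l _; rewrite mxE. Qed.
Lemma frobC X A : frob X A = frob A X.
Proof. by rewrite /frob -mxtrace_tr trmx_mul trmxK. Qed.
Lemma frobDr X A B : frob X (A + B) = frob X A + frob X B.
Proof. by rewrite /frob mulmxDr mxtraceD. Qed.
Lemma frobZr X a A : frob X (a *: A) = a * frob X A.
Proof. by rewrite /frob -scalemxAr mxtraceZ. Qed.
Lemma frob0r X : frob X 0 = 0.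
Proof. by rewrite /frob mulmx0 mxtrace0. Qed.
Lemma frobNr X A : frob X (- A) = - frob X A.
Proof. by rewrite -scaleN1r frobZr mulN1r. Qed.
Lemma frobBr X A B : frob X (A - B) = frob X A - frob X B.
Proof. by rewrite frobDr frobNr. Qed.
Lemma frobDl X Y A : frob (X + Y) A = frob X A + frob Y A.
Proof. by rewrite !(frobC _ A) frobDr. Qed.
Lemma frobZl a X A : frob (a *: X) A = a * frob X A.
Proof. by rewrite !(frobC _ A) frobZr. Qed.
Lemma frobNl X A : frob (- X) A = - frob X A.
Proof. by rewrite !(frobC _ A) frobNr. Qed.
Lemma frobBl X Y A : frob (X - Y) A = frob X A - frob Y A.
Proof. by rewrite !(frobC _ A) frobBr. Qed.
Lemma frob_sumr X (I : Type) (s : seq I) (P : pred I) (F : I -> 'M[R]_n) :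
  frob X (\sum_(i <- s | P i) F i) = \sum_(i <- s | P i) frob X (F i).
Proof. exact: (big_morph (frob X) (frobDr X) (frob0r X)). Qed.
Lemma frob_outer X u v : frob X (u *m v^T) = bil X u v.
Proof.
rewrite /frob mulmxA mxtrace_mulC /mxtrace big_ord1 mulmxA.
by rewrite -/(bil X^T v u) bil_tr trmxK.
Qed.
Lemma frob_delta X i j : frob X (delta_mx i j) = X i j.
Proof.
have -> : delta_mx i j = (delta_mx i 0 : 'cV[R]_n) *m (delta_mx j 0)^T.
  by rewrite trmx_delta mul_delta_mx.
by rewrite frob_outer bil_delta.
Qed.

End Alg.

Section Psd.
Variable R : realType.
Variable n : nat.
Implicit Types (A B X : 'M[R]_n) (u v : 'cV[R]_n).

Lemma psdE A : psd A <-> A^T = A /\ forall v, 0 <= bil A v v.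
Proof. by []. Qed.

Lemma psd_diag A i : psd A -> 0 <= A i i.
Proof. by move=> [_ h]; have := h (delta_mx i 0); rewrite -/(bil _ _ _) bil_delta. Qed.

Lemma sym_entry A i j : A^T = A -> A j i = A i j.
Proof. by move=> h; rewrite -{1}h mxE. Qed.

Lemma bil_expand A u w t :
  bil A (u + t *: w) (u + t *: w) =
  bil A u u + t * bil A u w + t * bil A w u + t ^+ 2 * bil A w w.
Proof.
rewrite !bilDl !bilDr !bilZl !bilZr; ring.
Qed.

Lemma psd_zero_diag A : psd A -> (forall i, A i i = 0) -> A = 0.
Proof.
move=> [hs hq] hd; apply/matrixP => i j; rewrite mxE.
have := hq (delta_mx i 0 + (- A i j) *: delta_mx j 0).
rewrite -/(bil _ _ _) bil_expand !bil_delta hd hd (sym_entry j i hs).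
move=> h; apply/eqP; rewrite -sqrf_eq0; apply/eqP.
apply/le_anti/andP; split; last exact: sqr_ge0.
nra.
Qed.

Definition nzd A : {set 'I_n} := [set k | A k k != 0]%SET.

Lemma psd_step X A i : psd X -> psd A -> A i i != 0 ->
  exists A', [/\ psd A', nzd A' \proper nzd A & frob X A' <= frob X A].
Proof.
move=> hX [hs hq] hi.
set a := A i i.
have a0 : 0 < a by rewrite lt0r hi psd_diag.
set u : 'cV[R]_n := A *m delta_mx i 0.
have hu k : u k ord0 = A k i by rewrite /u -colE mxE.
set A' := A - a^-1 *: (u *m u^T).
have hA'e k l : A' k l = A k l - a^-1 * (A k i * A l i).
  by rewrite /A' mxE [in X in _ + X]mxE [in X in - X]mxE [(u *m _) k l]mxE big_ord1 [u^T _ _]mxE !hu.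
have psdA' : psd A'.
  split.
    by rewrite /A' linearB /= linearZ /= trmx_mul trmxK hs.
  move=> v; rewrite -/(bil _ _ _) /A' bilBA bilZA bil_outer.
  set s := (v^T *m u) 0 0.
  have hs2 : (u^T *m v) 0 0 = s by rewrite mx11_tr trmxK.
  have hs3 : bil A v (delta_mx i 0) = s by rewrite /bil /s /u mulmxA.
  have hs4 : bil A (delta_mx i 0) v = s by rewrite bil_tr hs hs3.
  have := hq (v + (- (s / a)) *: delta_mx i 0).
  rewrite -/(bil _ _ _) bil_expand hs3 hs4 bil_delta -/a hs2.
  have -> : bil A v v + - (s / a) * s + - (s / a) * s + (- (s / a)) ^+ 2 * a
          = bil A v v - a^-1 * (s * s).
    by field; rewrite gt_eqF.
  by [].
exists A'; split => //.
  apply/properP; split.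
    apply/fintype.subsetP => k; rewrite /nzd !finset.in_set; apply: contraNN => /eqP hk.
    apply/eqP/le_anti/andP; split; last exact: psd_diag.
    rewrite hA'e hk sub0r oppr_le0; apply: mulr_ge0; first by rewrite invr_ge0 ltW.
    by rewrite -expr2 sqr_ge0.
  exists i; rewrite /nzd !finset.in_set // hA'e -/a negbK; apply/eqP.
  by field; rewrite gt_eqF.
have -> : A = A' + a^-1 *: (u *m u^T) by rewrite /A' subrK.
rewrite frobDr frobZr frob_outer lerDl; apply: mulr_ge0; first by rewrite invr_ge0 ltW.
by case: hX => _ h; exact: h.
Qed.

Lemma psd_frob X A : psd X -> psd A -> 0 <= frob X A.
Proof.
move=> hX; move: {2}#|nzd A| (leqnn #|nzd A|) => m; elim: m A => [|m IH] A hm hA.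
  have -> : A = 0.
    apply: psd_zero_diag => // i; apply/eqP; apply: contraTT hm => hi.
    by rewrite -ltnNge card_gt0; apply/finset.set0Pn; exists i; rewrite /nzd finset.in_set.
  by rewrite frob0r.
case: (pickP [pred k | A k k != 0]) => [i /= hi|hn].
  have [A' [hA' hpr hle]] := psd_step hX hA hi.
  apply: le_trans hle; apply: IH => //.
  by rewrite -ltnS; exact: leq_trans (proper_card hpr) hm.
have -> : A = 0.
  by apply: psd_zero_diag => // i; have := hn i => /= /negbFE /eqP.
by rewrite frob0r.
Qed.

End Psd.

Section Prob.
Variable R : realType.
Variable n : nat.
Implicit Types (A B X : 'M[R]_n) (u v w : 'cV[R]_n).

Lemma entryB p q (M N : 'M[R]_(p,q)) i j : (M - N) i j = M i j - N i j.
Proof. by rewrite !mxE. Qed.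
Lemma entryZ p q a (M : 'M[R]_(p,q)) i j : (a *: M) i j = a * M i j.
Proof. by rewrite !mxE. Qed.

Definition ev : 'cV[R]_n := const_mx 1.
Definition dv (i j : 'I_n) : 'cV[R]_n := delta_mx i 0 - delta_mx j 0.

Lemma eeT_outer : eeT R n = ev *m ev^T.
Proof. by apply/matrixP => i j; rewrite !mxE big_ord1 !mxE mulr1. Qed.

Lemma Ledge_outer i j : Ledge R i j = dv i j *m (dv i j)^T.
Proof.
apply/matrixP => k l; rewrite !mxE big_ord1 !mxE.
have h0 : (ord0 == 0 :> 'I_1) by []. by rewrite h0 !andbT.
Qed.

Lemma bil1 u v : bil 1%:M u v = (u^T *m v) 0 0.
Proof. by rewrite /bil mulmx1. Qed.

Lemma eTe : (ev^T *m ev) 0 0 = n%:R.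
Proof. by rewrite mxE (eq_bigr (fun=> 1)) ?sumr_const ?card_ord // => k _; rewrite !mxE mulr1. Qed.

Lemma dv_e i j : (dv i j)^T *m ev = 0.
Proof.
apply/matrixP => a b; rewrite /dv linearB /= !trmx_delta mulmxBl -!rowE !mxE.
by rewrite subrr.
Qed.

Definition lap B := B^T = B /\ B *m ev = 0.

Lemma lap0 : lap 0.
Proof. by split; [rewrite trmx0|rewrite mul0mx]. Qed.
Lemma lapD B1 B2 : lap B1 -> lap B2 -> lap (B1 + B2).
Proof. by move=> [h1 h1'] [h2 h2']; split; rewrite ?linearD /= ?mulmxDl ?h1 ?h2 ?h1' ?h2' ?addr0. Qed.
Lemma lapZ a B : lap B -> lap (a *: B).
Proof. by move=> [h h']; split; rewrite ?linearZ /= ?h // -scalemxAl h' scaler0. Qed.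
Lemma lap_sum (I : Type) (s : seq I) (P : pred I) (F : I -> 'M[R]_n) :
  (forall i, P i -> lap (F i)) -> lap (\sum_(i <- s | P i) F i).
Proof.
move=> h; elim/big_rec: _ => [|i x Pi hx]; first exact: lap0.
exact: lapD (h i Pi) hx.
Qed.
Lemma lap_Ledge i j : lap (Ledge R i j).
Proof.
rewrite Ledge_outer; split; first by rewrite trmx_mul trmxK.
by rewrite -mulmxA dv_e mulmx0.
Qed.

Definition inD X := frob X 1%:M = 1 /\ frob X (eeT R n) = 0 /\ psd X.

Lemma rank1_inD u : (ev^T *m u) 0 0 = 0 -> 0 < bil 1%:M u u ->
  inD ((bil 1%:M u u)^-1 *: (u *m u^T)).
Proof.
move=> he hp; set c := (bil 1%:M u u)^-1.
split; first by rewrite frobZl frobC frob_outer /c mulVf // gt_eqF.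
split.
  rewrite frobZl frobC frob_outer eeT_outer bil_outer.
  by rewrite mx11_tr trmxK he mulr0 mulr0.
split; first by rewrite linearZ /= trmx_mul trmxK.
move=> v; rewrite -/(bil _ _ _) bilZA bil_outer mx11_tr [(u^T *m v) 0 0]mx11_tr !trmxK.
by rewrite (mx11_tr v^T) trmxK; apply: mulr_ge0; [rewrite invr_ge0 ltW|rewrite -expr2 sqr_ge0].
Qed.

Lemma psd_construct B p : (0 < n)%N -> lap B ->
  (forall u, (ev^T *m u) 0 0 = 0 -> p * bil 1%:M u u <= bil B u u) ->
  psd (B + `|p| *: eeT R n - p%:M).
Proof.
move=> n0 [hs he] hq; split.
  by rewrite linearB linearD /= linearZ /= hs tr_scalar_mx eeT_outer trmx_mul trmxK.
move=> v; rewrite -/(bil _ _ _).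
set a := (ev^T *m v) 0 0 / n%:R.
have nR : 0 < (n%:R : R) by rewrite ltr0n.
set w := v - a *: ev.
have hw : (ev^T *m w) 0 0 = 0.
  by rewrite /w mulmxBr -scalemxAr entryB entryZ eTe /a divfK ?subrr // gt_eqF.
have hv : v = w + a *: ev by rewrite /w subrK.
have hBe x : bil B x ev = 0 by rewrite /bil -mulmxA he mulmx0 mxE.
have hBe' x : bil B ev x = 0 by rewrite bil_tr hs hBe.
have h1 : bil 1%:M w ev = 0 by rewrite bil1 mx11_tr trmxK hw.
have h1' : bil 1%:M ev w = 0 by rewrite bil1 hw.
rewrite bilBA bilDA bilZA bil_scalar hv !bil_expand hBe hBe' h1 h1'.
rewrite eeT_outer !bil_outer.
rewrite (mx11_tr w^T ev) trmxK hw.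
rewrite bil1 eTe.
rewrite -/w.
have := hq w hw.
set q1 := bil B w w; set q2 := bil 1%:M w w.
move=> hq'.
have hp : p <= `|p| * n%:R.
  have : 1 <= (n%:R : R) by rewrite ler1n.
  have := normr_ge0 p; have := ler_norm p. nra.
have : 0 <= a ^+ 2 * n%:R * (`|p| * n%:R - p).
  by apply: mulr_ge0; [apply: mulr_ge0; [exact: sqr_ge0|exact: ltW]|rewrite subr_ge0].
rewrite (hBe' ev) (bil1 ev ev) eTe -(bil1 w w) -/q2.
move=> h; nra.
Qed.

End Prob.

Section An.
Variable R : realType.
Variable n : nat.
Implicit Types (A B X : 'M[R]_n) (u v w : 'cV[R]_n).

Lemma frob_cont C : continuous (fun v : 'rV[R]_(n * n) => frob (vec_mx v) C).
Proof.
apply: lin_cont => a u v.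
by rewrite linearD linearZ /= frobDl frobZl.
Qed.

Lemma inD_box X i j : inD X -> -1 <= X i j <= 1.
Proof.
move=> [htr [_ hX]].
have hd k : X k k <= 1.
  move: htr; rewrite /frob mulmx1 mxtrace_tr /mxtrace (bigD1 k) //= => <-.
  rewrite lerDl; apply: sumr_ge0 => l _; exact: psd_diag.
have hs := sym_entry i j hX.1.
have h1 := hX.2 (delta_mx i 0 + 1 *: delta_mx j 0).
have h2 := hX.2 (delta_mx i 0 + (-1) *: delta_mx j 0).
rewrite -/(bil _ _ _) bil_expand !bil_delta hs in h1.
rewrite -/(bil _ _ _) bil_expand !bil_delta hs in h2.
have := hd i; have := hd j; have := psd_diag i hX; have := psd_diag j hX.
move=> *; apply/andP; split; nra.
Qed.

Definition Dset : set 'rV[R]_(n * n) := [set v | inD (vec_mx v)].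

Lemma closed_frob_eq C r : closed [set v : 'rV[R]_(n * n) | frob (vec_mx v) C = r].
Proof.
have := @preimage_closed _ _ (fun v : 'rV[R]_(n * n) => frob (vec_mx v) C) [set x | x = r].
apply; last exact: closed_eq.
by move=> x _; exact: frob_cont.
Qed.

Lemma closed_frob_ge C : closed [set v : 'rV[R]_(n * n) | 0 <= frob (vec_mx v) C].
Proof.
have := @preimage_closed _ _ (fun v : 'rV[R]_(n * n) => frob (vec_mx v) C) [set x | 0 <= x].
apply; last exact: closed_ge.
by move=> x _; exact: frob_cont.
Qed.

Lemma Dset_closed : closed Dset.
Proof.
have -> : Dset = [set v | frob (vec_mx v) 1%:M = 1] `&` [set v | frob (vec_mx v) (eeT R n) = 0]
   `&` \bigcap_(ij in [set: 'I_n * 'I_n]) [set v | frob (vec_mx v) (delta_mx ij.1 ij.2 - delta_mx ij.2 ij.1) = 0]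
   `&` \bigcap_(u in [set: 'cV[R]_n]) [set v | 0 <= frob (vec_mx v) (u *m u^T)].
  apply/seteqP; split => v /=.
    move=> [h1 [h2 [hs hq]]]; split; [split; [split|]|] => //.
      move=> [i j] _ /=; rewrite frobBr !frob_delta -(sym_entry i j hs) subrr //.
    by move=> u _ /=; rewrite frob_outer; exact: hq.
  move=> [[[h1 h2] hs] hq]; split => //; split => //.
  have hs' : (vec_mx v)^T = vec_mx v.
    apply/matrixP => i j; rewrite mxE; apply/eqP; rewrite -subr_eq0; apply/eqP.
    by have := hs (j, i) I; rewrite /= frobBr !frob_delta.
  split => // u; have := hq u I; rewrite /= frob_outer //.
apply: closedI; first apply: closedI; first apply: closedI.
- exact: closed_frob_eq.
- exact: closed_frob_eq.
- by apply: closed_bigI => ij _; exact: closed_frob_eq.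
- by apply: closed_bigI => u _; exact: closed_frob_ge.
Qed.

Lemma Dset_compact : compact Dset.
Proof.
have Bco : compact [set v : 'rV[R]_(n * n) | forall i, v ord0 i \in `[(-1 : R), 1]].
  apply: (@rV_compact _ _ (fun=> `[(-1 : R), 1]%classic)).
  by move=> _; apply: segment_compact.
apply: subclosed_compact Dset_closed Bco _ => v hv k.
case/mxvec_indexP: k => i j.
rewrite (_ : v ord0 _ = vec_mx v i j); last by rewrite -[in LHS](vec_mxK v); exact: mxvecE.
by rewrite in_itv /=; exact: inD_box.
Qed.

Lemma D_min (phi : 'M[R]_n -> R) :
  continuous (fun v : 'rV[R]_(n * n) => phi (vec_mx v)) -> (exists X, inD X) ->
  exists2 X, inD X & forall Y, inD Y -> phi X <= phi Y.
Proof.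
move=> hc [X0 hX0].
have ne : Dset !=set0 by exists (mxvec X0); rewrite /Dset /= mxvecK.
have [v hv hmin] := compact_EVT_min ne Dset_compact (continuous_subspaceT hc).
exists (vec_mx v); first by move: hv; rewrite inE.
move=> Y hY; have := hmin (mxvec Y); rewrite mxvecK; apply.
by rewrite inE /Dset /= mxvecK.
Qed.

End An.

Section Max.
Variable R : realType.
Variable I : eqType.
Implicit Types (f : I -> R).

Lemma bmax_ge f x0 (r : seq I) i : i \in r -> f i <= \big[Num.max/x0]_(j <- r) f j.
Proof.
elim: r => [//|a r IH]; rewrite inE big_cons => /orP[/eqP ->|hi].
  by rewrite le_max lexx.
by rewrite le_max IH ?orbT.
Qed.

Lemma bmax_le f x0 (r : seq I) y : x0 <= y -> (forall j, f j <= y) ->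
  \big[Num.max/x0]_(j <- r) f j <= y.
Proof.
move=> h0 h; elim: r => [|a r IH]; first by rewrite big_nil.
by rewrite big_cons ge_max h IH.
Qed.

Lemma bmax_attain f i0 (r : seq I) : exists j, \big[Num.max/f i0]_(j <- r) f j = f j.
Proof.
elim: r => [|a r [j IH]]; first by exists i0; rewrite big_nil.
rewrite big_cons IH; case: (leP (f a) (f j)) => h.
  by exists j.
by exists a.
Qed.

Lemma bmax_cont (T : topologicalType) (F : I -> T -> R) i0 (r : seq I) :
  (forall i, continuous (F i)) ->
  continuous (fun x => \big[Num.max/F i0 x]_(j <- r) F j x).
Proof.
move=> h; elim: r => [|a r IH].
  under eq_fun do rewrite big_nil. exact: h.
under eq_fun do rewrite big_cons.
move=> x; apply: (@continuous_max R T (F a) (fun x => \big[Num.max/F i0 x]_(j <- r) F j x)).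
  exact: h.
exact: IH.
Qed.

End Max.

Section Sep.
Variable R : realType.
Variable n : nat.
Implicit Types (A B X Y : 'M[R]_n) (u v w : 'cV[R]_n).

Lemma inD_convex X Y t : inD X -> inD Y -> 0 <= t <= 1 -> inD (X + t *: (Y - X)).
Proof.
move=> [hx1 [hx2 [hxs hxq]]] [hy1 [hy2 [hys hyq]]] /andP[t0 t1].
split; first by rewrite frobDl frobZl frobBl hx1 hy1 subrr mulr0 addr0.
split; first by rewrite frobDl frobZl frobBl hx2 hy2 subrr mulr0 addr0.
split; first by rewrite linearD /= linearZ /= linearB /= hxs hys.
move=> v; rewrite -/(bil _ _ _) bilDA bilZA bilBA.
have := hxq v; have := hyq v; rewrite -!/(bil _ _ _) => h1 h2.
nra.
Qed.

Lemma maxsq_ineq (x y : R) :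
  Num.max 0 (x + y) ^+ 2 <= Num.max 0 x ^+ 2 + 2 * Num.max 0 x * y + y ^+ 2.
Proof.
case: (leP 0 (x + y)) => h1; case: (leP 0 x) => h2; nra.
Qed.

Lemma separation (I : finType) (g : I -> 'M[R]_n -> R) (p : R) :
  (forall i X Y t, g i (X + t *: (Y - X)) = g i X + t * (g i Y - g i X)) ->
  (forall i, continuous (fun v : 'rV[R]_(n * n) => g i (vec_mx v))) ->
  (exists X, inD X) ->
  (forall X, inD X -> exists i, p < g i X) ->
  exists w : I -> R, [/\ forall i, 0 <= w i, \sum_i w i = 1 &
     forall X, inD X -> p <= \sum_i w i * g i X].
Proof.
move=> hlin hcont hne hp.
pose psi X := \sum_i Num.max 0 (g i X - p) ^+ 2.
have hpc : continuous (fun v : 'rV[R]_(n * n) => psi (vec_mx v)).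
  apply: sum_cont => i; rewrite /=.
  have -> : (fun x : 'rV[R]_(n * n) => Num.max 0 (g i (vec_mx x) - p) ^+ 2) =
     (fun x => Num.max 0 (g i (vec_mx x) - p)) \* (fun x => Num.max 0 (g i (vec_mx x) - p)).
    by apply: funext => x; rewrite /= expr2.
  have hm : continuous (fun x : 'rV[R]_(n * n) => Num.max 0 (g i (vec_mx x) - p)).
    move=> x; apply: (@continuous_max R _ (fun=> 0) (fun x => g i (vec_mx x) - p)).
      exact: cst_continuous.
    apply: (@continuousB _ R^o); first exact: hcont.
    exact: cst_continuous.
  by move=> x; apply: continuousM; apply: hm.
have [X0 hX0 hmin] := D_min hpc hne.
pose r i := Num.max 0 (g i X0 - p).
have r0 i : 0 <= r i by rewrite /r le_max lexx.
have [i1 hi1] := hp X0 hX0.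
have Spos : 0 < \sum_i r i.
  rewrite (bigD1 i1) //=; apply: ltr_pwDl; last by apply: sumr_ge0.
  by rewrite /r lt_max subr_gt0 hi1 orbT.
have key : forall X, inD X -> \sum_i r i * g i X0 <= \sum_i r i * g i X.
  move=> X hX; rewrite -subr_ge0 -sumrB.
  set delta := \sum_i (r i * g i X - r i * g i X0).
  rewrite leNgt; apply/negP => hd.
  set H := \sum_i (g i X - g i X0) ^+ 2.
  have H0 : 0 <= H by apply: sumr_ge0 => i _; exact: sqr_ge0.
  set t := - delta / (H - delta).
  have hHd : 0 < H - delta by rewrite subr_gt0 (lt_le_trans hd H0).
  have t0 : 0 < t by rewrite /t divr_gt0 // oppr_gt0.
  have t1 : t <= 1 by rewrite /t ler_pdivrMr // mul1r; lra.
  have hXt : inD (X0 + t *: (X - X0)) by apply: inD_convex => //; rewrite ltW ?t0.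
  have hle : psi (X0 + t *: (X - X0)) <= psi X0 + (2 * t * delta + t ^+ 2 * H).
    rewrite /psi /delta /H !mulr_sumr -!big_split /=.
    apply: ler_sum => i _; rewrite hlin.
    have := maxsq_ineq (g i X0 - p) (t * (g i X - g i X0)).
    rewrite (_ : g i X0 + t * (g i X - g i X0) - p = g i X0 - p + t * (g i X - g i X0)); last by ring.
    move=> h; apply: (le_trans h); rewrite le_eqVlt; apply/orP; left; apply/eqP; rewrite /r; ring.
  have e : t * (H - delta) = - delta by rewrite /t divfK // gt_eqF.
  have hlt : 2 * t * delta + t ^+ 2 * H < 0 by nra.
  have := hmin _ hXt; lra.
pose S := \sum_i r i.
exists (fun i => r i / S); split.
- by move=> i; rewrite divr_ge0 // ltW.
- by rewrite -mulr_suml mulfV // gt_eqF.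
move=> X hX.
have -> : \sum_i r i / S * g i X = (\sum_i r i * g i X) / S.
  by rewrite mulr_suml; apply: eq_bigr => i _; rewrite mulrAC.
rewrite ler_pdivlMr //; apply: le_trans (key X hX).
rewrite /S mulr_sumr; apply: ler_sum => i _.
rewrite /r; case: (leP 0 (g i X0 - p)) => h; nra.
Qed.
End Sep.

Theorem proposition2 (R : realType) (N : nat) (e1 e2 : rel 'I_N) (c : R) :
  (0 < N)%N -> simple_graph e1 -> simple_graph e2 -> 0 <= c ->
  exists p : R,
    ((forall w lam2 mu, primal_feasible e1 e2 c w lam2 mu -> lam2 <= p) /\
     (forall eps : R, 0 < eps ->
        exists w lam2 mu, primal_feasible e1 e2 c w lam2 mu /\ p - eps < lam2)) /\
    (forall xi X, dual_feasible xi X -> p <= frob X (L0 R e1 e2) - c * xi) /\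
    (exists xi X, dual_feasible xi X /\ frob X (L0 R e1 e2) - c * xi = p).
Proof.
move=> hN _ _ hc.
pose i0 : 'I_N := Ordinal hN.
pose Li i := Ledge R (lshift N i) (rshift N i).
pose L := L0 R e1 e2.
pose f (X : 'M[R]_(N + N)) i := frob X (Li i).
pose M X := \big[Num.max/f X i0]_i f X i.
pose F X := frob X L + c * M X.
have hne : exists X : 'M[R]_(N + N), inD X.
  pose u := dv R (lshift N i0) (rshift N i0).
  exists ((bil 1%:M u u)^-1 *: (u *m u^T)); apply: rank1_inD.
    by rewrite mx11_tr trmxK dv_e mxE.
  rewrite /u /dv bilBl !bilBr !bil_delta !mxE eq_lrshift eq_rlshift !eqxx /=.
  lra.
have hFc : continuous (fun v : 'rV[R]_((N + N) * (N + N)) => F (vec_mx v)).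
  rewrite /F; apply: contD; first exact: frob_cont.
  apply: contMc.
  apply: (@bmax_cont R _ _ (fun i v => f (vec_mx v) i)) => i.
  exact: frob_cont.
have [Xs hXs hmin] := D_min hFc hne.
exists (F Xs).
have fM X i : f X i <= M X by apply: bmax_ge; exact: mem_index_enum.
have frob_Linter X (w : 'I_N -> R) : frob X (Linter w) = \sum_i w i * f X i.
  by rewrite /Linter frob_sumr; apply: eq_bigr => i _; rewrite frobZr.
have frob_scalar (X : 'M[R]_(N + N)) (a : R) : frob X a%:M = a * frob X 1%:M.
  by rewrite -frobZr scalemx1.
split; [split|split].
- move=> w lam mu [hpsd [hsum hw]].
  have := psd_frob hXs.2.2 hpsd.
  rewrite frobBr 2!frobDr frobZr frob_scalar frob_Linter hXs.1 hXs.2.1 mulr0 addr0 mulr1 subr_ge0.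
  have : \sum_i w i * f Xs i <= c * M Xs.
    rewrite -hsum mulr_suml; apply: ler_sum => i _; by apply: ler_wpM2l; [exact: hw|exact: fM].
  rewrite /F -/L; lra.
- move=> eps heps.
  pose p := F Xs - eps / 2.
  pose g i X := frob X (L + c *: Li i).
  have := @separation R (N + N) 'I_N g p.
  case.
  + by move=> i X Y t; rewrite /g frobDl frobZl frobBl.
  + by move=> i; exact: frob_cont.
  + exact: hne.
  + move=> X hX; have [j hj] := bmax_attain (fun i => f X i) i0 (index_enum 'I_N).
    exists j; rewrite /g frobDr frobZr.
    have h1 := hmin X hX; have h2 : M X = f X j := hj.
    rewrite /F in h1; rewrite /p /F; rewrite /f in h2; rewrite h2 in h1; lra.
  move=> w [hw0 hw1 hwX].
  exists (fun i => c * w i), p, `|p|; split; last by rewrite /p; lra.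
  split; last split.
  + apply: psd_construct.
    * by rewrite addn_gt0 hN.
    * apply: lapD; first by apply: lap_sum => i _; apply: lapZ; exact: lap_Ledge.
      rewrite /L0; apply: lapD; apply: lap_sum => i _; apply: lap_sum => j _; exact: lap_Ledge.
    * move=> u hu.
      have hsq : bil 1%:M u u = \sum_k u k 0 ^+ 2.
        by rewrite bil1 mxE; apply: eq_bigr => k _; rewrite mxE expr2.
      have nu0 : 0 <= bil 1%:M u u by rewrite hsq; apply: sumr_ge0 => k _; exact: sqr_ge0.
      case: (ltP 0 (bil 1%:M u u)) => hnu.
        have hX := rank1_inD hu hnu.
        have := hwX _ hX.
        have -> : \sum_i w i * g i ((bil 1%:M u u)^-1 *: (u *m u^T)) =
                  frob ((bil 1%:M u u)^-1 *: (u *m u^T)) (Linter (fun i => c * w i) + L0 R e1 e2).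
          rewrite frobDr frob_Linter /g.
          rewrite (eq_bigr (fun i => frob ((bil 1%:M u u)^-1 *: (u *m u^T)) L * w i +
                     (c * w i) * f ((bil 1%:M u u)^-1 *: (u *m u^T)) i)); last first.
            by move=> i _; rewrite frobDr frobZr /f; ring.
          by rewrite big_split /= -mulr_sumr hw1 mulr1 addrC.
        rewrite frobZl frobC frob_outer.
        have hinv : (bil 1%:M u u)^-1 * bil 1%:M u u = 1 by rewrite mulVf // gt_eqF.
        move=> h; have := ler_wpM2r (ltW hnu) h; by rewrite mulrAC hinv mul1r.
      have hu0 : u = 0.
        have h0 : \sum_k u k 0 ^+ 2 = 0 by rewrite -hsq; apply/le_anti/andP; split.
        apply/matrixP => k l; rewrite (ord1 l) mxE.
        have := psumr_eq0P (fun k _ => sqr_ge0 (u k 0)) h0 (i:=k) isT.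
        by move/eqP; rewrite sqrf_eq0 => /eqP.
      by rewrite hu0 /bil !mulmx0 !mxE mulr0.
  + by rewrite -mulr_sumr hw1 mulr1.
  + by move=> i; apply: mulr_ge0.
- move=> xi X [h1 [h2 [h3 h4]]].
  have hX : inD X by [].
  have := hmin X hX.
  have : M X <= - xi by apply: bmax_le => //; exact: h3.
  move=> hM; have := ler_wpM2l hc hM; rewrite /F -/L; lra.
- exists (- M Xs), Xs; split; last by rewrite /F mulrN opprK.
  split; first exact: hXs.1.
  split; first exact: hXs.2.1.
  split; last exact: hXs.2.2.
  by move=> i; rewrite opprK; exact: fM.
Qed.
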